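(* Under the assumptions below, let $y_{\varrho h}\in Y_h$ be the unique Galerkin solution with $\varrho=h^{2\alpha}$. Then there is a constant $c>0$ independent of $h$ and $\overline{y}$ such that $$\|y_{\varrho h}-\overline{y}\|_{H_Y}\le c\begin{cases}\|\overline{y}\|_{H_Y}&\text{for }\overline{y}\in H_Y,\\ h^\alpha\|\overline{y}\|_D&\text{for }\overline{y}\in Y,\\ h^{2\alpha}\|D\overline{y}\|_{H_Y}&\text{for }\overline{y}\in Y,\ D\overline{y}\in H_Y.\end{cases}$$ Moreover, if $\overline{y}\in[H_Y,Y]_s$ for some $s\in[0,1]$, then $\|y_{\varrho h}-\overline{y}\|_{H_Y}\le c\,h^{\alpha s}\|\overline{y}\|_{[H_Y,Y]_s}$.
   Context: Abstract setting: Let $Y\subset H_Y\subset Y^*$ be a Gelfand triple of real Hilbert spaces, with duality pairing $\langle\cdot,\cdot\rangle_{Y^*,Y}$ extending the inner product of $H_Y$. Let $D:Y\to Y^*$ be bounded, linear, self-adjoint and elliptic, $\|y\|_D:=\langle Dy,y\rangle_{Y^*,Y}^{1/2}$ (an equivalent norm on $Y$). For $y\in Y$ we write ''$Dy\in H_Y$'' if there is $w\in H_Y$ with $\langle Dy,v\rangle_{Y^*,Y}=\langle w,v\rangle_{H_Y}$ for all $v\in Y$, and then $\|Dy\|_{H_Y}:=\|w\|_{H_Y}$. Discretization: For each discretization parameter $h\in(0,h_0]$ let $Y_h\subset Y$ be a finite-dimensional subspace, and assume there are maps $P_h:Y\to Y_h$, an exponent $\alpha>0$ and constants $c_1,c_2,c_3,c_4>0$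 independent of $h$ such that for all $y\in Y$: $\|y-P_hy\|_{H_Y}\le c_1h^\alpha\|y\|_D$ and $\|y-P_hy\|_D\le c_2\|y\|_D$; and, if in addition $Dy\in H_Y$: $\|y-P_hy\|_{H_Y}\le c_3h^{2\alpha}\|Dy\|_{H_Y}$ and $\|y-P_hy\|_D\le c_4h^\alpha\|Dy\|_{H_Y}$. Given $\overline{y}\in H_Y$ and $\varrho>0$, the Galerkin solution $y_{\varrho h}\in Y_h$ satisfies $\langle y_{\varrho h},y_h\rangle_{H_Y}+\varrho\langle Dy_{\varrho h},y_h\rangle_{Y^*,Y}=\langle\overline{y},y_h\rangle_{H_Y}$ for all $y_h\in Y_h$. $[H_Y,Y]_s$, $s\in[0,1]$, denotes the interpolation space between $H_Y$ and $Y$ (with $Y$ normed by $\|\cdot\|_D$) obtained by an exact interpolation method of exponent $s$ (e.g. the real $K$-method), with $[H_Y,Y]_0=H_Y$ and $[H_Y,Y]_1=Y$. *)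

(* Defs.v *)
From HB Require Import structures.
From mathcomp Require Import all_boot all_order all_algebra.
From mathcomp Require Import all_classical all_reals all_analysis.
Set Implicit Arguments.
Unset Strict Implicit.
Unset Printing Implicit Defensive.
Import Order.TTheory GRing.Theory Num.Theory.
Local Open Scope classical_set_scope.
Local Open Scope ring_scope.

Definition form_norm {R : realType} {H : lmodType R} (b : H -> H -> R) (x : H) : R :=
  Num.sqrt (b x x).

Definition is_inner_product {R : realType} {H : lmodType R} (ip : H -> H -> R) : Prop :=
  (forall x y, ip x y = ip y x) /\
  (forall k x y z, ip (k *: x + y) z = k * ip x z + ip y z) /\
  (forall x, 0 <= ip x x) /\
  (forall x, ip x x = 0 -> x = 0).

Definition complete_wrt {R : realType} {H : lmodType R} (P : set H) (nrm : H -> R) : Prop :=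
  forall u : nat -> H, (forall n, P (u n)) ->
  (forall e, 0 < e -> exists N, forall m n, (N <= m)%N -> (N <= n)%N -> nrm (u m - u n) < e) ->
  exists l, P l /\ (forall e, 0 < e -> exists N, forall n, (N <= n)%N -> nrm (u n - l) < e).

Definition is_subspace {R : realType} {H : lmodType R} (P : set H) : Prop :=
  P 0 /\ (forall k x y, P x -> P y -> P (k *: x + y)).

(* Gelfand triple Y ⊂ H_Y ⊂ Y^* with H_Y = (H, ip), and the operator D : Y -> Y^*
   represented by its bilinear form a(y,v) = <Dy, v>_{Y^*,Y}.  Y is normed by
   ||y||_D = sqrt(a y y) (an equivalent norm on Y), so boundedness of D is automatic
   and ellipticity amounts to positivity. *)
Record gelfand_setting {R : realType} {H : lmodType R}
    (ip : H -> H -> R) (Y : set H) (a : H -> H -> R) : Prop := {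
  gs_ip : is_inner_product ip;
  gs_H_complete : complete_wrt setT (form_norm ip);
  gs_Y_subspace : is_subspace Y;
  gs_a_sym : forall y v, Y y -> Y v -> a y v = a v y;
  gs_a_lin : forall k y z v, Y y -> Y z -> Y v -> a (k *: y + z) v = k * a y v + a z v;
  gs_a_pos : forall y, Y y -> y <> 0 -> 0 < a y y;
  gs_Y_complete : complete_wrt Y (form_norm a);
  gs_Y_embed : exists C, 0 < C /\ forall y, Y y -> form_norm ip y <= C * form_norm a y;
  gs_Y_dense : forall x e, 0 < e -> exists y, Y y /\ form_norm ip (x - y) < e
}.

(* "Dy ∈ H_Y with representative w". *)
Definition D_in_H {R : realType} {H : lmodType R}
    (ip : H -> H -> R) (Y : set H) (a : H -> H -> R) (y w : H) : Prop :=
  forall v, Y v -> a y v = ip w v.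

Definition fin_dim_subspace {R : realType} {H : lmodType R} (Y V : set H) : Prop :=
  exists (n : nat) (b : 'I_n -> H), (forall i, Y (b i)) /\
    (forall x, V x <-> exists c : 'I_n -> R, x = \sum_(i < n) c i *: b i).

Definition galerkin_solution {R : realType} {H : lmodType R}
    (ip a : H -> H -> R) (V : set H) (rho : R) (ybar y : H) : Prop :=
  V y /\ (forall v, V v -> ip y v + rho * a y v = ip ybar v).

Definition K_functional {R : realType} {H : lmodType R}
    (ip : H -> H -> R) (Y : set H) (a : H -> H -> R) (t : R) (y : H) : R :=
  inf [set r | exists y0 y1, Y y1 /\ y = y0 + y1 /\
                 r = form_norm ip y0 + t * form_norm a y1].

Definition K_integral {R : realType} {H : lmodType R}
    (ip : H -> H -> R) (Y : set H) (a : H -> H -> R) (s : R) (y : H) : \bar R :=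
  let f := fun t : R => ((t `^ (- s) * K_functional ip Y a t y) ^+ 2 / t)%R in
  (\int[@lebesgue_measure R]_(t in [set t : R | (0 < t)%R]) (f t)%:E)%E.

(* Membership in [H_Y, Y]_s: H_Y for s = 0, Y for s = 1, and the (normalized)
   real K-method (theta = s, q = 2) for 0 < s < 1. *)
Definition interp_mem {R : realType} {H : lmodType R}
    (ip : H -> H -> R) (Y : set H) (a : H -> H -> R) (s : R) (y : H) : Prop :=
  if s == 0 then True
  else if s == 1 then Y y
  else (K_integral ip Y a s y < +oo)%E.

(* Norm of [H_Y, Y]_s; for 0 < s < 1 the K-norm is normalized by sqrt(2 s (1-s)),
   which makes the method exact of exponent s (and [X,X]_s = X isometrically). *)
Definition interp_norm {R : realType} {H : lmodType R}
    (ip : H -> H -> R) (Y : set H) (a : H -> H -> R) (s : R) (y : H) : R :=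
  if s == 0 then form_norm ip y
  else if s == 1 then form_norm a y
  else Num.sqrt (2 * s * (1 - s)) * Num.sqrt (fine (K_integral ip Y a s y)).

(* Main.v *)
Require Import Defs.
From HB Require Import structures.
From mathcomp Require Import all_boot all_order all_algebra.
From mathcomp Require Import all_classical all_reals all_analysis.
From mathcomp Require Import ring lra.
From mathcomp Require Import measurable_realfun.
Import Order.TTheory GRing.Theory Num.Theory.
Local Open Scope classical_set_scope.
Local Open Scope ring_scope.

Definition bil {R : realType} {H : lmodType R} (b : H -> H -> R) (P : set H) :=
  [/\ is_subspace P, (forall y v, P y -> P v -> b y v = b v y),
      (forall k y z v, P y -> P z -> P v -> b (k *: y + z) v = k * b y v + b z v)
    & (forall y, P y -> 0 <= b y y)].

Section Bil.
Context {R : realType} {H : lmodType R} {b : H -> H -> R} {P : set H} (hb : bil b P).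
Let Psub : is_subspace P. Proof. by case: hb. Qed.
Let bsym : forall y v, P y -> P v -> b y v = b v y. Proof. by case: hb. Qed.
Let blin : forall k y z v, P y -> P z -> P v -> b (k *: y + z) v = k * b y v + b z v.
Proof. by case: hb. Qed.
Let bpos : forall y, P y -> 0 <= b y y. Proof. by case: hb. Qed.

Lemma bS {y v} : P y -> P v -> b y v = b v y. Proof. exact: bsym. Qed.
Lemma bL k {y z v} : P y -> P z -> P v -> b (k *: y + z) v = k * b y v + b z v.
Proof. exact: blin. Qed.
Lemma bP {y} : P y -> 0 <= b y y. Proof. exact: bpos. Qed.
Lemma P0 : P 0. Proof. by case: Psub. Qed.
Lemma PZD k {x y} : P x -> P y -> P (k *: x + y). Proof. by case: Psub => _; apply. Qed.
Lemma PD {x y} : P x -> P y -> P (x + y).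
Proof. by move=> Px Py; have := PZD 1 Px Py; rewrite scale1r. Qed.
Lemma PZ k {x} : P x -> P (k *: x).
Proof. by move=> Px; have := PZD k Px P0; rewrite addr0. Qed.
Lemma PN {x} : P x -> P (- x).
Proof. by move=> Px; have := PZ (-1) Px; rewrite scaleN1r. Qed.
Lemma PB {x y} : P x -> P y -> P (x - y).
Proof. by move=> Px Py; apply: PD => //; apply: PN. Qed.

Lemma bD {x y z} : P x -> P y -> P z -> b (x + y) z = b x z + b y z.
Proof. by move=> Px Py Pz; have := bL 1 Px Py Pz; rewrite scale1r mul1r. Qed.
Lemma b0l {z} : P z -> b 0 z = 0.
Proof.
move=> Pz; have := bD P0 P0 Pz; rewrite addr0 => e.
lra.
Qed.
Lemma bZ k {x z} : P x -> P z -> b (k *: x) z = k * b x z.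
Proof. by move=> Px Pz; have := bL k Px P0 Pz; rewrite addr0 b0l // addr0. Qed.
Lemma bN {x z} : P x -> P z -> b (- x) z = - b x z.
Proof. by move=> Px Pz; rewrite -scaleN1r bZ // mulN1r. Qed.
Lemma bB {x y z} : P x -> P y -> P z -> b (x - y) z = b x z - b y z.
Proof. by move=> Px Py Pz; rewrite bD ?bN //; apply: PN. Qed.
Lemma bDr {x y z} : P x -> P y -> P z -> b z (x + y) = b z x + b z y.
Proof. by move=> Px Py Pz; rewrite bS ?bD ?(bS Pz) //; apply: PD. Qed.
Lemma bBr {x y z} : P x -> P y -> P z -> b z (x - y) = b z x - b z y.
Proof. by move=> Px Py Pz; rewrite bS ?bB ?(bS Pz) //; apply: PB. Qed.
Lemma bNr {x z} : P x -> P z -> b z (- x) = - b z x.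
Proof. by move=> Px Pz; rewrite bS ?bN ?(bS Pz) //; apply: PN. Qed.
Lemma bZr k {x z} : P x -> P z -> b z (k *: x) = k * b z x.
Proof. by move=> Px Pz; rewrite bS ?bZ ?(bS Pz) //; apply: PZ. Qed.

Lemma bsqD {x y} : P x -> P y -> b (x + y) (x + y) = b x x + 2 * b x y + b y y.
Proof.
move=> Px Py; rewrite bD ?bDr //; last exact: PD.
by rewrite (bS Py Px); ring.
Qed.
Lemma bsqB {x y} : P x -> P y -> b (x - y) (x - y) = b x x - 2 * b x y + b y y.
Proof.
move=> Px Py; rewrite bB ?bBr //; last exact: PB.
by rewrite (bS Py Px); ring.
Qed.

Lemma CS {x y} : P x -> P y -> b x y ^+ 2 <= b x x * b y y.
Proof.
move=> Px Py.
have q : forall r, 0 <= b x x + 2 * r * b x y + r ^+ 2 * b y y.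
  move=> r; have := bP (PD Px (PZ r Py)).
  have Pry := PZ r Py.
  rewrite bsqD // (bZr r Py Px) (bZ r Py Pry) (bZr r Py Py) => h.
  by rewrite expr2; lra.
have xx0 := bP Px; have yy0 := bP Py.
have [yy|yy] := eqVneq (b y y) 0.
  rewrite yy mulr0.
  have [xy|xy] := eqVneq (b x y) 0; first by rewrite xy expr0n.
  have := q (- (b x x + 1) / (2 * b x y)).
  rewrite yy mulr0 addr0.
  have -> : 2 * (- (b x x + 1) / (2 * b x y)) * b x y = - (b x x + 1) by field.
  lra.
have yyp : 0 < b y y by rewrite lt_def yy yy0.
have := q (- b x y / b y y).
have -> : b x x + 2 * (- b x y / b y y) * b x y + (- b x y / b y y) ^+ 2 * b y y
   = b x x - b x y ^+ 2 / b y y by field.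
rewrite subr_ge0 ler_pdivrMr // mulrC.
Qed.

Lemma N0 {x} : 0 <= form_norm b x. Proof. exact: sqrtr_ge0. Qed.
Lemma Nsq {x} : P x -> form_norm b x ^+ 2 = b x x.
Proof. by move=> Px; rewrite sqr_sqrtr // bP. Qed.

Lemma CSabs {x y} : P x -> P y -> `|b x y| <= form_norm b x * form_norm b y.
Proof.
move=> Px Py; rewrite -(@ler_pXn2r _ 2%N) // ?nnegrE ?mulr_ge0 ?N0 //.
by rewrite real_normK ?num_real // exprMn !Nsq // CS.
Qed.

Lemma le_sq (u v : R) : 0 <= v -> u ^+ 2 <= v ^+ 2 -> u <= v.
Proof. move=> v0 h; nra. Qed.

Lemma NB {x y} : P x -> P y -> form_norm b (x - y) <= form_norm b x + form_norm b y.
Proof.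
move=> Px Py; apply: le_sq; first by rewrite addr_ge0 ?N0.
rewrite (Nsq (PB Px Py)) (bsqB Px Py) sqrrD (Nsq Px) (Nsq Py).
have h := CSabs Px Py.
have : - b x y <= form_norm b x * form_norm b y.
  by apply: le_trans h; rewrite -normrN ler_norm.
lra.
Qed.
Lemma NDp {x y} : P x -> P y -> form_norm b (x + y) <= form_norm b x + form_norm b y.
Proof.
move=> Px Py; apply: le_sq; first by rewrite addr_ge0 ?N0.
rewrite (Nsq (PD Px Py)) (bsqD Px Py) sqrrD (Nsq Px) (Nsq Py).
have := CSabs Px Py => h.
have : b x y <= form_norm b x * form_norm b y by apply: le_trans h; rewrite ler_norm.
lra.
Qed.
Lemma NN {x} : P x -> form_norm b (- x) = form_norm b x.
Proof. by move=> Px; rewrite /form_norm bN ?bNr ?opprK //; apply: PN. Qed.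
Lemma NBC {x y} : P x -> P y -> form_norm b (x - y) = form_norm b (y - x).
Proof. by move=> Px Py; rewrite -opprB (NN (PB Py Px)). Qed.
Lemma Nzero : form_norm b 0 = 0.
Proof.
have h := Nsq P0; rewrite (b0l P0) in h.
have h0 := @N0 0; nra.
Qed.
End Bil.
Section S.
Context (R : realType).
Notation mu := (@lebesgue_measure R).
Lemma pow_int (q a b : R) : q != 0 -> 0 < a -> a < b ->
  (\int[mu]_(x in `[a, b]) (x `^ (q - 1))%:E = ((b `^ q - a `^ q) / q)%:E)%E.
Proof.
move=> q0 a0 ab.
have dF : forall x : R, 0 < x -> is_derive x 1 (fun y => q^-1 * y `^ q) (x `^ (q - 1)).
  move=> x x0.
  have := @is_deriveZ R R R (fun y => y `^ q) (q^-1) x 1 _ (is_derive1_powR q x0).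
  by rewrite /GRing.scale /= mulrA mulVf // mul1r.
rewrite (@continuous_FTC2 _ _ (fun y => q^-1 * y `^ q)) //.
- by rewrite -EFinB -mulrBr mulrC.
- apply: derivable_within_continuous => x; rewrite in_itv /= => /andP[ax _].
  by apply: derivable_powR; rewrite in_itv /= andbT (lt_le_trans a0).
- split.
  + move=> x; rewrite in_itv /= => /andP[ax _].
    by case: (dF x (lt_trans a0 ax)).
  + apply: cvg_at_right_filter.
    have := @differentiable_continuous R R^o R^o a (fun y => q^-1 * y `^ q); apply; apply/derivable1_diffP.
    by case: (dF a a0).
  + apply: cvg_at_left_filter.
    have := @differentiable_continuous R R^o R^o b (fun y => q^-1 * y `^ q); apply; apply/derivable1_diffP.
    by case: (dF b (lt_trans a0 ab)).
- move=> x; rewrite in_itv /= => /andP[ax _].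
  by rewrite derive1E; case: (dF x (lt_trans a0 ax)).
Qed.

Lemma powRDp (x u v : R) : 0 < x -> x `^ (u + v) = x `^ u * x `^ v.
Proof. by move=> x0; rewrite powRD // (gt_eqF x0) implybT. Qed.

Lemma lb_integral (f : R -> R) (cc p a b : R) :
  measurable_fun [set x : R | 0 < x] f ->
  (forall x, 0 < x -> 0 <= f x) ->
  0 <= cc -> p != 0 -> 0 < a -> a < b ->
  (forall x, a <= x <= b -> cc * x `^ (p - 1) <= f x) ->
  ((cc * ((b `^ p - a `^ p) / p))%:E <=
     \int[mu]_(x in [set x : R | (0 < x)%R]) (f x)%:E)%E.
Proof.
move=> mf f0 cc0 p0 a0 ab hf.
have mD : measurable [set x : R | 0 < x].
  have -> : [set x : R | 0 < x] = `]0, +oo[%classic.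
    by apply/seteqP; split => x /=; rewrite in_itv /= andbT.
  exact: measurable_itv.
have sub : `[a, b]%classic `<=` [set x : R | 0 < x].
  by move=> x /=; rewrite in_itv /= => /andP[ax _]; exact: (lt_le_trans a0 ax).
apply: (@le_trans _ _ (\int[mu]_(x in `[a, b]) (f x)%:E)%E); last first.
  apply: ge0_subset_integral => //. all: try (by move=> x /= x0; rewrite lee_fin f0). { exact: (@measurable_EFinP _ _ _ _ f).2. }
rewrite EFinM -(@pow_int p a b p0 a0 ab) -ge0_integralZl_EFin //; last 2 first.
- by move=> x /=; rewrite in_itv /= => /andP[ax _]; rewrite lee_fin powR_ge0.
- apply/measurable_EFinP; exact: measurable_funTS (measurable_powR _).
apply: ge0_le_integral => //.
- by move=> x _; rewrite lee_fin mulr_ge0 // powR_ge0.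
- exact: (@measurable_EFinP _ _ _ _ (fun x => cc * x `^ (p - 1))).2 (measurable_funM (measurable_cst _) (measurable_funTS (measurable_powR _))).
- exact: (@measurable_EFinP _ _ _ _ f).2 (measurable_funS mD sub mf).
all: by move=> x /=; rewrite in_itv /= => xab; rewrite -EFinM lee_fin hf.
Qed.

Lemma K_bound (K : R -> R) (s t : R) :
  0 < s -> s < 1 -> 0 < t ->
  (forall u, 0 < u -> 0 <= K u) ->
  (forall u v, 0 < u -> u <= v -> K u <= K v) ->
  (forall u v, 0 < u -> u <= v -> u * K v <= v * K u) ->
  (\int[mu]_(x in [set x : R | (0 < x)%R]) ((x `^ (- s) * K x) ^+ 2 / x)%:E < +oo)%E ->
  K t <= 2 * t `^ s * Num.sqrt (2 * s * (1 - s)) *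
     Num.sqrt (fine (\int[mu]_(x in [set x : R | (0 < x)%R]) ((x `^ (- s) * K x) ^+ 2 / x)%:E)).
Proof.
move=> s0 s1 t0 K0 Kmono Kratio.
set I := (\int[mu]_(x in _) _)%E => Ifin.
have mD : measurable [set x : R | 0 < x].
  have -> : [set x : R | 0 < x] = `]0, +oo[%classic.
    by apply/seteqP; split => x /=; rewrite in_itv /= andbT.
  exact: measurable_itv.
have mK : measurable_fun [set x : R | 0 < x] K.
  pose g x := if 0 < x then K x else 0.
  have gnd : {homo g : u v / u <= v}.
    move=> u v uv; rewrite /g; case: ifP => u0; case: ifP => v0.
    - exact: Kmono.
    - by move: (lt_le_trans u0 uv); rewrite v0.
    - exact: K0.
    - exact: le_refl.
  have mg := nondecreasing_measurable mD gnd.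
  apply: (eq_measurable_fun g _ mg).
  by move=> x; rewrite inE /g /= => ->.
have mf : measurable_fun [set x : R | 0 < x] (fun x => (x `^ (- s) * K x) ^+ 2 / x).
  apply: (eq_measurable_fun (fun x => (x `^ (- s) * K x) ^+ 2 * x `^ (-1))).
    by move=> x; rewrite inE /= => x0; rewrite powR_inv1 // ltW.
  apply: measurable_funM; last exact: measurable_funTS (measurable_powR _).
  apply: measurable_funX; apply: measurable_funM => //.
  exact: measurable_funTS (measurable_powR _).
have f0 : forall x, 0 < x -> 0 <= (x `^ (- s) * K x) ^+ 2 / x.
  by move=> x x0; rewrite divr_ge0 // ?sqr_ge0 // ltW.
have I0 : (0 <= I)%E by apply: integral_ge0 => x x0; rewrite lee_fin f0.
have IJ : I = (fine I)%:E by rewrite fineK // ge0_fin_numE.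
set J := fine I.
have J0 : 0 <= J by rewrite -lee_fin -IJ.
set T := t `^ s.
have T0 : 0 < T by rewrite powR_gt0.
have tN : forall x, 0 < x -> x `^ (- s) = (x `^ s)^-1 by move=> x _; rewrite powRN.
have Kt0 := K0 t t0.
suff main : K t ^+ 2 <= 8 * s * (1 - s) * T ^+ 2 * J.
  have r0 : 0 <= 2 * T * Num.sqrt (2 * s * (1 - s)) * Num.sqrt J.
    by rewrite !mulr_ge0 // ltW.
  have rsq : (2 * T * Num.sqrt (2 * s * (1 - s)) * Num.sqrt J) ^+ 2
      = 8 * s * (1 - s) * T ^+ 2 * J.
    rewrite !exprMn !sqr_sqrtr //; last by rewrite !mulr_ge0 // ?subr_ge0 ltW.
    ring.
  rewrite -rsq in main.
  by rewrite -(@ler_pXn2r _ 2%N) // nnegrE.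
have f0' : forall x, 0 < x -> 0 <= (fun x => (x `^ (- s) * K x) ^+ 2 / x) x by [].
have TT : t `^ (- s) = T^-1 by rewrite tN.
have [sh|sh] := leP s (2^-1).
- pose p := -(2 * s).
  have p0 : p != 0 by rewrite /p oppr_eq0 mulf_neq0 // gt_eqF.
  pose lam := 2 `^ (2 * s)^-1.
  have lam0 : 0 < lam by rewrite powR_gt0.
  have lamp : lam `^ p = 2^-1.
    by rewrite /lam -powRrM /p mulrN mulVf ?powR_inv1 // gt_eqF // mulr_gt0.
  have lam1 : 1 < lam.
    rewrite ltNge; apply/negP => H.
    have : lam `^ (2 * s) <= 1 `^ (2 * s).
      by apply: ge0_ler_powR => //; rewrite ?nnegrE ?ltW ?mulr_gt0.
    rewrite powR1 /= /lam -powRrM mulVf ?powRr1 //; last by rewrite gt_eqF // mulr_gt0.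
    by move=> /= C; lra.
  have ab : t < lam * t by rewrite ltr_pMl.
  have H := @lb_integral (fun x => (x `^ (- s) * K x) ^+ 2 / x) (K t ^+ 2) p t (lam * t)
    mf f0' (sqr_ge0 _) p0 t0 ab.
  have {}H : ((K t ^+ 2 * (((lam * t) `^ p - t `^ p) / p))%:E <= I)%E.
    apply: H => x /andP[tx _].
    have x0 : 0 < x := lt_le_trans t0 tx.
    rewrite (_ : p - 1 = -s + -s + -1); last by rewrite /p; ring.
    rewrite !powRDp // (powR_inv1 (ltW x0)).
    have P0 : 0 <= x `^ (- s) := powR_ge0 _ _.
    rewrite (_ : (x `^ (- s) * K x) ^+ 2 / x = K x ^+ 2 * (x `^ (- s) * x `^ (- s) * x^-1)); last by ring.
    apply: ler_wpM2r; first by rewrite !mulr_ge0 // invr_ge0 ltW.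
    have := Kmono t x t0 tx; nra.
  rewrite IJ lee_fin (powRM _ (ltW lam0) (ltW t0)) lamp in H.
  rewrite (_ : p = -s + -s) in H; last by rewrite /p; ring.
  rewrite powRDp // TT in H.
  have e : K t ^+ 2 * ((2^-1 * (T^-1 * T^-1) - T^-1 * T^-1) / (-s + -s))
      = K t ^+ 2 / (4 * s * T ^+ 2).
    by field; rewrite gt_eqF //; lra.
  rewrite e ler_pdivrMr in H; last by rewrite !mulr_gt0 // exprn_gt0.
  have Q : 0 <= T ^+ 2 * J by rewrite mulr_ge0 // sqr_ge0.
  have Q2 : 0 <= s * (1 - 2 * s) * (T ^+ 2 * J) by rewrite !mulr_ge0 //; lra.
  apply: (le_trans H); rewrite -/J; rewrite -/J; clearbody T J; lra.
- pose p := 2 - 2 * s.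
  have pp : 0 < p by rewrite /p; lra.
  have p0 : p != 0 by rewrite gt_eqF.
  pose eps := 2 `^ (- p^-1).
  have eps0 : 0 < eps by rewrite powR_gt0.
  have epsp : eps `^ p = 2^-1.
    by rewrite /eps -powRrM mulNr mulVf ?powR_inv1.
  have eps1 : eps < 1.
    rewrite ltNge; apply/negP => H.
    have : 1 `^ p <= eps `^ p.
      by apply: ge0_ler_powR => //; rewrite ?nnegrE ?ltW.
    rewrite powR1 /= epsp.
    by move=> C; lra.
  have ab : eps * t < t by rewrite gtr_pMl.
  have H := @lb_integral (fun x => (x `^ (- s) * K x) ^+ 2 / x) (K t ^+ 2 / t ^+ 2) p (eps * t) t
    mf f0' (divr_ge0 (sqr_ge0 _) (sqr_ge0 _)) p0 (mulr_gt0 eps0 t0) ab.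
  have {}H : ((K t ^+ 2 / t ^+ 2 * ((t `^ p - (eps * t) `^ p) / p))%:E <= I)%E.
    apply: H => x /andP[tx xt].
    have x0 : 0 < x := lt_le_trans (mulr_gt0 eps0 t0) tx.
    rewrite (_ : p - 1 = -s + -s + 1); last by rewrite /p; ring.
    rewrite !powRDp // (powRr1 (ltW x0)).
    have P0 : 0 <= x `^ (- s) := powR_ge0 _ _.
    have e1 : K t ^+ 2 / t ^+ 2 * (x `^ (- s) * x `^ (- s) * x)
       = (x * K t) ^+ 2 * (x `^ (- s) * x `^ (- s) / (t ^+ 2 * x)).
      by field; rewrite !gt_eqF.
    have e2 : (x `^ (- s) * K x) ^+ 2 / x
       = (t * K x) ^+ 2 * (x `^ (- s) * x `^ (- s) / (t ^+ 2 * x)).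
      by field; rewrite !gt_eqF.
    rewrite e1 e2; apply: ler_wpM2r.
      by rewrite divr_ge0 ?mulr_ge0 // ltW.
    have a0 : 0 <= x * K t by rewrite mulr_ge0 // ltW.
    have h := Kratio x t x0 xt.
    by rewrite ler_pXn2r // nnegrE // (le_trans a0 h).
  rewrite IJ lee_fin (powRM _ (ltW eps0) (ltW t0)) epsp in H.
  rewrite (_ : p = 1 + 1 + (-s + -s)) in H; last by rewrite /p; ring.
  rewrite !powRDp // TT (powRr1 (ltW t0)) in H.
  have e : K t ^+ 2 / t ^+ 2 * ((t * t * (T^-1 * T^-1) - 2^-1 * (t * t * (T^-1 * T^-1))) /
       (1 + 1 + (-s + -s))) = K t ^+ 2 / (4 * (1 - s) * T ^+ 2).
    by field; rewrite !gt_eqF //; lra.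
  rewrite e ler_pdivrMr in H; last by rewrite !mulr_gt0 ?exprn_gt0 //; lra.
  have Q : 0 <= T ^+ 2 * J by rewrite mulr_ge0 // sqr_ge0.
  have Q2 : 0 <= (2 * s - 1) * (1 - s) * (T ^+ 2 * J) by rewrite !mulr_ge0 //; lra.
  apply: (le_trans H); rewrite -/J; clearbody T J; lra.
Qed.
End S.
Lemma quad (R : realType) (x B K : R) : 0 <= x -> 0 <= B -> 0 <= K ->
  x ^+ 2 <= 2 * B * x + K * B ^+ 2 -> x <= (K + 2) * B.
Proof.
move=> x0 B0 K0 h.
have [xs|xl] := leP x (2 * B); first by nra.
have hy : x * (x - 2 * B) <= K * B ^+ 2 by nra.
have : 2 * B * (x - 2 * B) <= K * B ^+ 2 by nra.
have [B00|Bp] := eqVneq B 0; first by move=> _; rewrite B00 in h *; nra.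
have Bpos : 0 < B by rewrite lt_def Bp B0.
move=> h2.
have : x - 2 * B <= K * B / 2.
  rewrite ler_pdivlMr //.
  have h3 : B * ((x - 2 * B) * 2) <= B * (K * B).
    have e1 : B * ((x - 2 * B) * 2) = 2 * B * (x - 2 * B) by ring.
    have e2 : B * (K * B) = K * B ^+ 2 by ring.
    by rewrite e1 e2.
  by rewrite ler_pM2l // in h3.
nra.
Qed.

Theorem mainTheorem4 (R : realType) (H : lmodType R) (ip a : H -> H -> R)
  (Y : set H) (Yh : R -> set H) (Ph : R -> H -> H)
  (h0 alpha c1 c2 c3 c4 : R) :
  gelfand_setting ip Y a ->
  0 < h0 -> 0 < alpha -> 0 < c1 -> 0 < c2 -> 0 < c3 -> 0 < c4 ->
  (forall h, 0 < h <= h0 -> fin_dim_subspace Y (Yh h)) ->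
  (forall h y, 0 < h <= h0 -> Y y -> Yh h (Ph h y)) ->
  (forall h y, 0 < h <= h0 -> Y y ->
     form_norm ip (y - Ph h y) <= c1 * h `^ alpha * form_norm a y /\
     form_norm a (y - Ph h y) <= c2 * form_norm a y) ->
  (forall h y w, 0 < h <= h0 -> Y y -> D_in_H ip Y a y w ->
     form_norm ip (y - Ph h y) <= c3 * h `^ (2 * alpha) * form_norm ip w /\
     form_norm a (y - Ph h y) <= c4 * h `^ alpha * form_norm ip w) ->
  exists c, 0 < c /\
    forall h, 0 < h <= h0 -> forall ybar yrh : H,
      galerkin_solution ip a (Yh h) (h `^ (2 * alpha)) ybar yrh ->
      [/\ form_norm ip (yrh - ybar) <= c * form_norm ip ybar,
          Y ybar -> form_norm ip (yrh - ybar) <= c * h `^ alpha * form_norm a ybar,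
          forall w, Y ybar -> D_in_H ip Y a ybar w ->
            form_norm ip (yrh - ybar) <= c * h `^ (2 * alpha) * form_norm ip w
        & forall s, 0 <= s <= 1 -> interp_mem ip Y a s ybar ->
            form_norm ip (yrh - ybar) <= c * h `^ (alpha * s) * interp_norm ip Y a s ybar].
Proof.
move=> G h0p alp c1p c2p c3p c4p Yhfin PhY Ph1 Ph2.
have [ipip Hc Ysub asym alin apos Yc Yemb Ydense] := G.
have hip : bil ip setT.
  case: ipip => isym [ilin [ipos _]].
  split.
  - by split.
  - by move=> y v _ _; apply: isym.
  - by move=> k y z v _ _ _; apply: ilin.
  - by move=> y _; apply: ipos.
have Y0 : Y 0 by case: Ysub.
have a00 : a 0 0 = 0.
  have := alin 1 0 0 0 Y0 Y0 Y0; rewrite scale1r addr0 mul1r => e; lra.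
have ha : bil a Y.
  split => // y Yy; have [->|ny] := eqVneq y 0; first by rewrite a00.
  by apply: ltW; apply: apos => //; apply/eqP.
pose C2 := c1 + 1 + c2.
pose Kc := c3 ^+ 2 + c4 ^+ 2 + 2 * c3.
have Kc0 : 0 <= Kc by rewrite /Kc !addr_ge0 ?sqr_ge0 // mulr_ge0 // ltW.
have C21 : 1 <= C2 by rewrite /C2; lra.
pose c := 2 * C2 + Kc + 3.
exists c; split; first by rewrite /c; lra.
move=> h hh ybar yrh [Yyr gal].
have hpos : 0 < h by case/andP: hh.
have [n [bv [bY span]]] := Yhfin h hh.
have YhY : forall x, Yh h x -> Y x.
  move=> x /span [cc ->]; apply: (big_ind Y).
  - exact: P0 ha.
  - move=> x1 x2 P1 P2. exact: (PD ha P1 P2).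
  - by move=> i _; exact: (PZ ha (cc i) (bY i)).
have Yhs : is_subspace (Yh h).
  split.
  - apply/span; exists (fun _ => 0); by rewrite big1 // => i _; rewrite scale0r.
  - move=> k x y /span [cx ->] /span [cy ->]; apply/span.
    exists (fun i => k * cx i + cy i).
    rewrite scaler_sumr -big_split /=; apply: eq_bigr => i _.
    by rewrite scalerDl scalerA.
have hipY : bil ip (Yh h).
  case: hip => _ isym ilin ipos; split => //.
  - by move=> y v _ _; apply: isym.
  - by move=> k y z v _ _ _; apply: ilin.
  - by move=> y _; apply: ipos.
set t := h `^ alpha.
set rho := h `^ (2 * alpha).
have rhot : rho = t ^+ 2 by rewrite /rho /t mulrC powRrM powR_mulrn // powR_ge0.
have t0 : 0 < t by rewrite powR_gt0.
have rho0 : 0 <= rho by rewrite rhot sqr_ge0.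
set e := yrh - ybar.
have Yyr' := YhY _ Yyr.
have mini : forall v, Yh h v ->
    ip e e + rho * a yrh yrh <= ip (v - ybar) (v - ybar) + rho * a v v.
  move=> v Yhv.
  pose d := v - yrh.
  have Yhd : Yh h d := PB hipY Yhv Yyr.
  have Yd := YhY _ Yhd.
  have ev : v - ybar = e + d by rewrite /e /d [RHS]addrC addrA subrK.
  have vv : v = yrh + d by rewrite /d [RHS]addrC subrK.
  have avv : a v v = a yrh yrh + 2 * a yrh d + a d d.
    by rewrite {1 2}vv (bsqD ha).
  rewrite ev (bsqD hip) // avv.
  have g := gal d Yhd.
  have ied : ip e d = ip yrh d - ip ybar d by rewrite /e (bB hip).
  have add0 : 0 <= a d d by case: ha => _ _ _; apply.
  have ipdd : 0 <= ip d d by case: hip => _ _ _; apply.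
  have := mulr_ge0 rho0 add0.
  move=> hh1; rewrite ied; rewrite -/rho in g; clearbody d rho; lra.
have ipe : ip e e = form_norm ip e ^+ 2 by rewrite (Nsq hip).
have L : forall y0 y1, Y y1 -> ybar = y0 + y1 ->
    form_norm ip e <= form_norm ip y0 + C2 * t * form_norm a y1.
  move=> y0 y1 Yy1 ey.
  pose v := Ph h y1.
  have Yhv : Yh h v := PhY h y1 hh Yy1.
  have Yv := YhY _ Yhv.
  have [P1 P2] := Ph1 h y1 hh Yy1.
  rewrite -/t -/v in P1 P2.
  have m := mini v Yhv.
  have eq1 : v - ybar = (v - y1) - y0 by rewrite ey -addrA -opprD [y1 + y0]addrC.
  have N1 : form_norm ip (v - ybar) <= c1 * t * form_norm a y1 + form_norm ip y0.
    rewrite eq1; apply: (le_trans (NB hip (x := v - y1) (y := y0) I I)).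
    by rewrite (NBC hip (x := v) (y := y1) I I) lerD2r.
  have eq2 : v = y1 - (y1 - v) by rewrite opprB addrC subrK.
  have N2 : form_norm a v <= (1 + c2) * form_norm a y1.
    rewrite {1}eq2; apply: (le_trans (NB ha Yy1 (PB ha Yy1 Yv))).
    by rewrite mulrDl mul1r lerD2l.
  have ay0 : 0 <= a yrh yrh by case: ha => _ _ _; apply.
  have := mulr_ge0 rho0 ay0.
  rewrite ipe (_ : ip (v - ybar) (v - ybar) = form_norm ip (v - ybar) ^+ 2) in m;
    last by rewrite (Nsq hip).
  rewrite -(Nsq ha Yv) rhot in m.
  have Ne0 := @N0 _ _ ip e.
  have Nv0 := @N0 _ _ ip (v - ybar).
  have Na0 := @N0 _ _ a v.
  have M0 := @N0 _ _ a y1.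
  have y00 := @N0 _ _ ip y0.
  move=> hr; apply: le_sq.
    by rewrite /C2 addr_ge0 // !mulr_ge0 // ?ltW //; lra.
  set A := c1 * t * form_norm a y1 + form_norm ip y0 in N1.
  set B := (1 + c2) * form_norm a y1 in N2.
  have hA : form_norm ip (v - ybar) ^+ 2 <= A ^+ 2 by rewrite ler_pXn2r // nnegrE (le_trans Nv0 N1).
  have hB : form_norm a v ^+ 2 <= B ^+ 2 by rewrite ler_pXn2r // nnegrE (le_trans Na0 N2).
  have -> : form_norm ip y0 + C2 * t * form_norm a y1 = A + t * B by rewrite /A /B /C2; ring.
  have tB : 0 <= t * B by apply: mulr_ge0; [exact: ltW | exact: le_trans Na0 N2].
  have A0 : 0 <= A by exact: (le_trans Nv0 N1).
  have t2 : t ^+ 2 * form_norm a v ^+ 2 <= t ^+ 2 * B ^+ 2 by rewrite ler_wpM2l // sqr_ge0.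
  clearbody A B; nra.
have Na0 : form_norm a 0 = 0 by apply: Nzero ha.
have Ni0 : form_norm ip 0 = 0 by apply: Nzero hip.
have nyb := @N0 _ _ ip ybar.
have case1 : form_norm ip e <= form_norm ip ybar.
  have := L ybar 0 Y0 (esym (addr0 _)); rewrite Na0 mulr0 addr0 //.
have case2 : Y ybar -> form_norm ip e <= C2 * t * form_norm a ybar.
  move=> Yb; have := L 0 ybar Yb (esym (add0r _)); rewrite Ni0 add0r //.
have case3 : forall w, Y ybar -> D_in_H ip Y a ybar w ->
    form_norm ip e <= (Kc + 2) * rho * form_norm ip w.
  move=> w Yb Dw.
  pose v := Ph h ybar.
  have Yhv : Yh h v := PhY h ybar hh Yb.
  have Yv := YhY _ Yhv.
  have [Q1 Q2] := Ph2 h ybar w hh Yb Dw.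
  rewrite -/rho -/t -/v in Q1 Q2.
  pose d0 := v - ybar.
  have Yd0 : Y d0 := PB ha Yv Yb.
  have Ye : Y e := PB ha Yyr' Yb.
  have m := mini v Yhv.
  have ey : yrh = ybar + e by rewrite /e [RHS]addrC subrK.
  have ev : v = ybar + d0 by rewrite /d0 [RHS]addrC subrK.
  have ayy : a yrh yrh = a ybar ybar + 2 * a ybar e + a e e.
    by rewrite {1 2}ey (bsqD ha).
  have avv : a v v = a ybar ybar + 2 * a ybar d0 + a d0 d0.
    by rewrite {1 2}ev (bsqD ha).
  rewrite ayy avv (Dw e Ye) (Dw d0 Yd0) -/d0 in m.
  have aee : 0 <= a e e by case: ha => _ _ _; apply.
  have W0 := @N0 _ _ ip w.
  have x0 := @N0 _ _ ip e.
  have cs1 : - ip w e <= form_norm ip w * form_norm ip e.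
    by apply: le_trans (CSabs hip (x := w) (y := e) I I); rewrite -normrN ler_norm.
  have cs2 : ip w d0 <= form_norm ip w * form_norm ip d0.
    by apply: le_trans (CSabs hip (x := w) (y := d0) I I); rewrite ler_norm.
  have nd : form_norm ip d0 <= c3 * rho * form_norm ip w.
    by rewrite /d0 (NBC hip (x := v) (y := ybar) I I).
  have nad : form_norm a d0 <= c4 * t * form_norm ip w.
    by rewrite /d0 (NBC ha Yv Yb).
  have nd0 := @N0 _ _ ip d0.
  have nad0 := @N0 _ _ a d0.
  have i1 : ip d0 d0 <= (c3 * rho * form_norm ip w) ^+ 2.
    by rewrite -(Nsq hip (x := d0) I) ler_pXn2r // nnegrE (le_trans nd0 nd).
  have i2 : a d0 d0 <= (c4 * t * form_norm ip w) ^+ 2.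
    by rewrite -(Nsq ha Yd0) ler_pXn2r // nnegrE (le_trans nad0 nad).
  have i4 : ip w d0 <= c3 * rho * form_norm ip w ^+ 2.
    apply: (le_trans cs2); rewrite expr2 mulrA [_ * form_norm ip w]mulrC.
    by rewrite ler_wpM2l.
  have j2 : rho * a d0 d0 <= rho * (c4 * t * form_norm ip w) ^+ 2 by rewrite ler_wpM2l.
  have j3 : rho * (- ip w e) <= rho * (form_norm ip w * form_norm ip e) by rewrite ler_wpM2l.
  have j4 : rho * ip w d0 <= rho * (c3 * rho * form_norm ip w ^+ 2) by rewrite ler_wpM2l.
  have j5 : 0 <= rho * a e e by rewrite mulr_ge0.
  rewrite ipe in m.
  have key : form_norm ip e ^+ 2 <= 2 * (rho * form_norm ip w) * form_norm ip e
                + Kc * (rho * form_norm ip w) ^+ 2.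
    have E1 : rho * (c4 * t * form_norm ip w) ^+ 2 = c4 ^+ 2 * (rho * form_norm ip w) ^+ 2.
      by rewrite rhot; ring.
    rewrite E1 in j2.
    rewrite /Kc.
    clearbody rho d0; move: m i1 j2 j3 j4 j5; clear; move=> m i1 j2 j3 j4 j5.
    nra.
  have := @quad R _ _ _ x0 (mulr_ge0 rho0 W0) Kc0 key.
  by rewrite mulrA.
have c1' : 1 <= c by rewrite /c; lra.
have cC2 : 2 * C2 <= c by rewrite /c; lra.
have cK : Kc + 2 <= c by rewrite /c; lra.
have Na0' := @N0 _ _ a ybar.
have Nb0 := @N0 _ _ ip ybar.
pose S u := [set r | exists y0 y1, Y y1 /\ ybar = y0 + y1 /\
                 r = form_norm ip y0 + u * form_norm a y1].
pose Kf u := K_functional ip Y a u ybar.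
have KfS : forall u, Kf u = inf (S u) by [].
have ne : forall u, S u !=set0.
  move=> u; exists (form_norm ip ybar + u * form_norm a 0); exists ybar, 0.
  by split => //; rewrite addr0.
have hlb : forall u, 0 <= u -> has_lbound (S u).
  move=> u u0; exists 0 => r [y0 [y1 [_ [_ ->]]]].
  by rewrite addr_ge0 ?N0 // mulr_ge0 ?N0.
have inS : forall u y0 y1, 0 <= u -> Y y1 -> ybar = y0 + y1 ->
    Kf u <= form_norm ip y0 + u * form_norm a y1.
  move=> u y0 y1 u0 Yy1 ey; rewrite KfS; apply: (ge_inf (hlb u u0)).
  by exists y0, y1.
have K0 : forall u, 0 < u -> 0 <= Kf u.
  move=> u u0; rewrite KfS; apply: lb_le_inf => // r [y0 [y1 [_ [_ ->]]]].
  by rewrite addr_ge0 ?N0 // mulr_ge0 ?N0 // ltW.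
have Kmono : forall u v, 0 < u -> u <= v -> Kf u <= Kf v.
  move=> u v u0 uv; rewrite [Kf v]KfS; apply: lb_le_inf => // r [y0 [y1 [Yy1 [ey ->]]]].
  apply: (le_trans (inS u y0 y1 (ltW u0) Yy1 ey)).
  by rewrite lerD2l ler_wpM2r ?N0.
have Kratio : forall u v, 0 < u -> u <= v -> u * Kf v <= v * Kf u.
  move=> u v u0 uv.
  have v0 : 0 < v := lt_le_trans u0 uv.
  have : u / v * Kf v <= Kf u.
    rewrite [Kf u]KfS; apply: lb_le_inf => // r [y0 [y1 [Yy1 [ey ->]]]].
    have h1 := inS v y0 y1 (ltW v0) Yy1 ey.
    have uv0 : 0 <= u / v by rewrite divr_ge0 // ltW.
    have uv1 : u / v <= 1 by rewrite ler_pdivrMr // mul1r.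
    apply: (le_trans (ler_wpM2l uv0 h1)).
    have -> : u / v * (form_norm ip y0 + v * form_norm a y1)
        = u / v * form_norm ip y0 + u * form_norm a y1 by field; rewrite gt_eqF.
    rewrite lerD2r.
    have := @N0 _ _ ip y0; nra.
  move=> h1; have := ler_wpM2l (ltW v0) h1.
  have -> : v * (u / v * Kf v) = u * Kf v by field; rewrite gt_eqF.
  done.
have NeK : form_norm ip e <= C2 * Kf t.
  have C20 : 0 < C2 by lra.
  rewrite mulrC -ler_pdivrMr //.
  rewrite KfS; apply: lb_le_inf => // r [y0 [y1 [Yy1 [ey ->]]]].
  rewrite ler_pdivrMr //.
  apply: (le_trans (L y0 y1 Yy1 ey)).
  have := @N0 _ _ ip y0; have := @N0 _ _ a y1; have := ltW t0; nra.
split.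
- apply: (le_trans case1); nra.
- move=> Yb; apply: (le_trans (case2 Yb)).
  have tM : 0 <= t * form_norm a ybar by rewrite mulr_ge0 // ltW.
  rewrite -[C2 * t * _]mulrA -[c * t * _]mulrA ler_wpM2r //; lra.
- move=> w Yb Dw; apply: (le_trans (case3 w Yb Dw)).
  have tM : 0 <= rho * form_norm ip w by rewrite mulr_ge0 // N0.
  by rewrite -[(Kc + 2) * rho * _]mulrA -[c * rho * _]mulrA ler_wpM2r.
- move=> s /andP[s0 s1] hm.
  rewrite /interp_mem in hm; rewrite /interp_norm.
  have [s00|sn0] := eqVneq s 0.
    rewrite s00 mulr0 powRr0 mulr1; apply: (le_trans case1); nra.
  have [s11|sn1] := eqVneq s 1.
    rewrite s11 mulr1 -/t; rewrite (negbTE sn0) s11 eqxx in hm.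
    apply: (le_trans (case2 hm)).
    have tM : 0 <= t * form_norm a ybar by rewrite mulr_ge0 // ltW.
    rewrite -[C2 * t * _]mulrA -[c * t * _]mulrA ler_wpM2r //; lra.
  rewrite (negbTE sn0) (negbTE sn1) in hm.
  have sp : 0 < s by rewrite lt_def sn0 s0.
  have s1' : s < 1 by rewrite lt_def eq_sym sn1 s1.
  have KB := @K_bound R Kf s t sp s1' t0 K0 Kmono Kratio hm.
  set Z := Num.sqrt (2 * s * (1 - s)) * Num.sqrt (fine (K_integral ip Y a s ybar)).
  have Z0 : 0 <= Z by rewrite mulr_ge0 // sqrtr_ge0.
  have KB' : Kf t <= 2 * t `^ s * Z by rewrite /Z mulrA; exact: KB.
  rewrite powRrM -/t.
  have T0 : 0 <= t `^ s := powR_ge0 _ _.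
  have Kft0 := K0 t t0.
  have h1 := ler_wpM2l (ltW (lt_le_trans ltr01 C21)) KB'.
  apply: (le_trans NeK); apply: (le_trans h1).
  have TZ : 0 <= t `^ s * Z by rewrite mulr_ge0.
  have -> : C2 * (2 * t `^ s * Z) = (2 * C2) * (t `^ s * Z) by ring.
  by rewrite -[X in _ <= X]mulrA ler_wpM2r.
Qed.
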